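(* Let $\lambda$ be a generic normalized additively alternating $n\times n$ complex matrix with biresidue matrix $b$, and let $I\subseteq\{0,\dots,n-2\}$ be such that $\{i,i+1\}$ is a smoothable edge of $b$ for every $i\in I$. Then no linear combination $\sum_{i\in I}\nu_i\boldsymbol\theta_i$ with all $\nu_i\in\mathbb{Z}_{\ge0}$ is an obstructed weight.
   Context: Additively alternating: $\lambda_{ji}=-\lambda_{ij}$; normalized: rows sum to $0$. $\lambda$ is generic if it has rank $n-1$ and every relevant $\operatorname{EExp}(\lambda)$-Hochschild-contributing weight is $\lambda$-Poisson-contributing, where $\operatorname{EExp}(\lambda)=(e^{\lambda_{ij}})$; a weight $\mathbf w\in\mathbb{Z}^n$ is relevant if $w_i\ge-1$, $\sum w_i=0$; $q$-Hochschild-contributing if $w_i\ge-1$ for all $i$ and $\prod_jq_{ij}^{w_j}=1$ whenever $w_i\ge0$; $\lambda$-Poisson-contributing if $w_i\ge-1$ for all $i$ and $\sum_j\lambda_{ij}w_j=0$ whenever $w_i\ge0$. The biresidue matrix is the unique normalized alternating $b$ with $b|_\Delta=(\lambda|_\Delta)^{-1}$, $\Delta=\{z\in\mathbb{C}^n:\sum z_i=0\}$. The edge $\{i,j\}$ is smoothable if $b_{ij}\ne0$ and $(b_{jk}+b_{ki})/b_{ij}\in\mathbb{Z}_{\ge0}$ for $k\ne i,j$; its smoothable weight has entries $-1$ at $i,j$ and $(b_{jk}+b_{ki})/b_{ij}$ at $k\ne i,j$; $\boldsymbol\theta_i$ denotes the smoothable weight of $\{i,i+1\}$. A weight $\mathbf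 w\in\mathbb{Z}^n$ is obstructed if there are three distinct indices $i,j,k$ with $w_i=w_j=w_k=-1$, $w_\ell\ge0$ for all $\ell\ne i,j,k$, and $\mathbf w$ is a complex linear combination of the rows $b_{i\bullet},b_{j\bullet},b_{k\bullet}$. *)

(* Defs.v *)
From HB Require Import structures.
From mathcomp Require Import all_boot all_order all_algebra.
From mathcomp Require Import reals sequences exp trigo.
From mathcomp Require Import complex.
Set Implicit Arguments. Unset Strict Implicit. Unset Printing Implicit Defensive.
Import Order.TTheory GRing.Theory Num.Theory.
Local Open Scope ring_scope.

Definition cexp (R : realType) (z : R[i]) : R[i] :=
  Complex (expR (complex.Re z) * cos (complex.Im z))
          (expR (complex.Re z) * sin (complex.Im z)).

Section Defs.
Variable R : realType.
Local Notation C := (R[i]).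
Variable n : nat.

Definition add_alternating (A : 'M[C]_n) : Prop :=
  forall i j, A j i = - A i j.

Definition normalized (A : 'M[C]_n) : Prop :=
  forall i, \sum_j A i j = 0.

Definition EExp (A : 'M[C]_n) : 'M[C]_n := \matrix_(i, j) cexp (A i j).

Definition relevant (w : 'I_n -> int) : Prop :=
  (forall i, -1 <= w i) /\ \sum_i w i = 0.

Definition hochschild_contributing (q : 'M[C]_n) (w : 'I_n -> int) : Prop :=
  (forall i, -1 <= w i) /\
  (forall i, 0 <= w i -> \prod_j (q i j) ^ (w j) = 1).

Definition poisson_contributing (A : 'M[C]_n) (w : 'I_n -> int) : Prop :=
  (forall i, -1 <= w i) /\
  (forall i, 0 <= w i -> \sum_j A i j * (w j)%:~R = 0).

Definition generic (A : 'M[C]_n) : Prop :=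
  \rank A = n.-1 /\
  (forall w, relevant w -> hochschild_contributing (EExp A) w ->
             poisson_contributing A w).

Definition in_Delta (z : 'cV[C]_n) : Prop := \sum_i z i 0 = 0.

(* b is the biresidue matrix of lambda: the (unique) normalized alternating
   matrix whose restriction to Delta is the inverse of lambda restricted to
   Delta (lambda maps Delta isomorphically onto Delta when lambda is
   normalized alternating of rank n-1). *)
Definition biresidue_of (A b : 'M[C]_n) : Prop :=
  normalized b /\ add_alternating b /\
  (forall z : 'cV[C]_n, in_Delta z -> b *m (A *m z) = z /\ A *m (b *m z) = z).

Definition smoothable (b : 'M[C]_n) (i j : 'I_n) : Prop :=
  b i j != 0 /\
  forall k, k != i -> k != j -> exists m : nat, (b j k + b k i) / b i j = m%:R.

Definition smoothable_weight (b : 'M[C]_n) (i j : 'I_n) (k : 'I_n) : C :=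
  if (k == i) || (k == j) then -1 else (b j k + b k i) / b i j.

Definition obstructed (b : 'M[C]_n) (w : 'I_n -> int) : Prop :=
  exists i j k : 'I_n,
    [/\ i != j, j != k & i != k] /\
    [/\ w i = -1, w j = -1 & w k = -1] /\
    (forall l, l != i -> l != j -> l != k -> 0 <= w l) /\
    exists c1 c2 c3 : C,
      forall l, (w l)%:~R = c1 * b i l + c2 * b j l + c3 * b k l.

End Defs.

Lemma ord_succ_proof n (i : 'I_n.-1) : (i.+1 < n)%N.
Proof. by case: i => i /=; case: n => [|n] //=; rewrite ltnS. Qed.

Definition ord_lo n (i : 'I_n.-1) : 'I_n := widen_ord (leq_pred n) i.
Definition ord_hi n (i : 'I_n.-1) : 'I_n := Ordinal (ord_succ_proof i).

Definition theta (R : realType) n (b : 'M[R[i]]_n) (i : 'I_n.-1) : 'I_n -> R[i] :=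
  smoothable_weight b (ord_lo i) (ord_hi i).

(* Main.v *)
Require Import Defs.
From HB Require Import structures.
From mathcomp Require Import all_boot all_order all_algebra.
From mathcomp Require Import reals sequences exp trigo.
From mathcomp Require Import complex.
From mathcomp Require Import ring zify.
Import Order.TTheory GRing.Theory Num.Theory.
Local Open Scope ring_scope.

Section Pf.
Local Set Implicit Arguments.
Local Unset Strict Implicit.
Variable R : realType.
Local Notation C := (R[i]).
Variable n : nat.
Variables (lam b : 'M[C]_n) (I : {set 'I_n.-1}) (nu : 'I_n.-1 -> nat).
Hypothesis balt : add_alternating b.
Hypothesis bnorm : normalized b.
Hypothesis bres : forall z : 'cV[C]_n, in_Delta z -> lam *m (b *m z) = z.
Hypothesis hsm : forall i, i \in I -> smoothable b (ord_lo i) (ord_hi i).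

Lemma bdiag i : b i i = 0.
Proof.
have h := balt i i.
have : b i i *+ 2 = 0 by rewrite mulr2n {1}h addNr.
by move/eqP; rewrite mulrn_eq0 orFb => /eqP.
Qed.

Definition beta m := b (ord_lo m) (ord_hi m).
Definition xx m : C := (nu m)%:R / beta m.
Definition dd m (p : 'I_n) : C := (p == ord_lo m)%:R - (p == ord_hi m)%:R.
Definition YY (P : 'I_n.-1 -> bool) p :=
  \sum_(m in I) (if P m then xx m * dd m p else 0).
Definition bv (Y : 'I_n -> C) l := \sum_p b l p * Y p.
Definition WW (P : 'I_n.-1 -> bool) l :=
  \sum_(m in I) (if P m then (nu m)%:R * theta b m l else 0).

Lemma sum_delta (F : 'I_n -> C) q : \sum_p F p * (p == q)%:R = F q.
Proof.
rewrite (bigD1 q) //= eqxx mulr1 big1 ?addr0 // => p /negbTE ->.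
by rewrite mulr0.
Qed.

Lemma sum_deltaL (F : 'I_n -> C) q : \sum_p (p == q)%:R * F p = F q.
Proof. rewrite -(sum_delta F q); apply: eq_bigr => p _; exact: mulrC. Qed.

Lemma sum_delta1 q : \sum_(p : 'I_n) (p == q)%:R = 1 :> C.
Proof.
rewrite (bigD1 q) //= eqxx big1 ?addr0 // => p /negbTE ->. by [].
Qed.

Lemma theta_eq m l : m \in I ->
  theta b m l = (b l (ord_lo m) - b l (ord_hi m)) / beta m.
Proof.
move=> mI; have [bz _] := hsm mI.
rewrite /theta /smoothable_weight /beta.
case: (eqVneq l (ord_lo m)) => [->|hl] /=.
  by rewrite bdiag sub0r mulNr divff.
case: (eqVneq l (ord_hi m)) => [->|hh] /=.
  by rewrite bdiag subr0 (balt (ord_lo m) (ord_hi m)) mulNr divff.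
by rewrite (balt l (ord_hi m)) addrC.
Qed.

Lemma bvYY P l : bv (YY P) l = WW P l.
Proof.
rewrite /bv /YY /WW.
under eq_bigr do rewrite mulr_sumr.
rewrite exchange_big /=; apply: eq_bigr => m mI.
case: (P m); last by rewrite big1 // => p _; rewrite mulr0.
under eq_bigr do rewrite mulrCA.
rewrite -mulr_sumr /dd.
under eq_bigr do rewrite mulrBr.
rewrite sumrB !sum_delta theta_eq //.
by rewrite /xx -mulrA (mulrC (beta m)^-1).
Qed.

Lemma sumYY P : \sum_p YY P p = 0.
Proof.
rewrite /YY exchange_big /= big1 // => m _.
case: (P m); last by rewrite big1.
by rewrite -mulr_sumr /dd sumrB !sum_delta1 subrr mulr0.
Qed.

Lemma sum_bv Y : \sum_l bv Y l = 0.
Proof.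
rewrite /bv exchange_big /= big1 // => p _.
rewrite -mulr_suml.
under eq_bigr => l _ do rewrite (balt p l).
by rewrite sumrN bnorm oppr0 mul0r.
Qed.

Lemma antisym Y : \sum_l Y l * bv Y l = 0.
Proof.
set X := \sum_l _.
have : X = - X.
  rewrite /X /bv.
  under eq_bigr do rewrite mulr_sumr.
  rewrite [LHS]exchange_big /= -sumrN; apply: eq_bigr => p _.
  rewrite -sumrN; apply: eq_bigr => l _.
  rewrite (balt p l). ring.
by move/eqP; rewrite -addr_eq0 -mulr2n mulrn_eq0 orFb => /eqP.
Qed.

Lemma ker_const (q : 'I_n -> C) : (0 < n)%N -> (forall l, bv q l = 0) ->
  forall l, q l = (\sum_p q p) / n%:R.
Proof.
move=> n0 hq l.
set S := \sum_p q p.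
pose z : 'cV[C]_n := \col_p (q p - S / n%:R).
have zD : in_Delta z.
  rewrite /in_Delta.
  under eq_bigr do rewrite mxE.
  rewrite sumrB -/S big_const_ord.
  have -> : forall k, iter k (+%R (S / n%:R)) 0 = S / n%:R *+ k.
    by elim=> [|k IH] //=; rewrite IH mulrS.
  by rewrite -mulr_natr divfK ?subrr // pnatr_eq0 -lt0n.
have bz : b *m z = 0.
  apply/matrixP => i j; rewrite !mxE.
  under eq_bigr do rewrite mxE mulrBr.
  rewrite sumrB -mulr_suml bnorm mul0r subr0.
  exact: hq.
have := bres zD; rewrite bz mulmx0 => /matrixP /(_ l 0); rewrite !mxE => /eqP.
by rewrite eq_sym subr_eq0 => /eqP.
Qed.

Lemma F0 i j k (c1 c2 c3 : C) :
  (forall l, WW xpredT l = c1 * b i l + c2 * b j l + c3 * b k l) ->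
  WW xpredT i = -1 -> WW xpredT j = -1 -> WW xpredT k = -1 ->
  forall l, l != i -> l != j -> l != k -> YY xpredT l = 0.
Proof.
move=> hW Wi Wj Wk.
have n0 : (0 < n)%N := leq_ltn_trans (leq0n i) (ltn_ord i).
pose y := YY xpredT.
pose z l := (l == i)%:R * c1 + (l == j)%:R * c2 + (l == k)%:R * c3.
have Wy l : WW xpredT l = bv y l by rewrite bvYY.
have hq : forall l, bv (fun p => y p + z p) l = 0.
  move=> l; rewrite /bv.
  under eq_bigr do rewrite mulrDr.
  rewrite big_split -/(bv y l) -Wy hW /z.
  under eq_bigr do rewrite !mulrDr !mulrA.
  rewrite !big_split -!mulr_suml !sum_delta (balt i l) (balt j l) (balt k l).
  rewrite /=; ring.
have hk := ker_const n0 hq.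
set S := \sum_p _ in hk.
have Sz : S = c1 + c2 + c3.
  rewrite /S big_split /= /y sumYY add0r /z !big_split /= -!mulr_suml !sum_delta1.
  by rewrite !mul1r.
have yl l : y l = S / n%:R - z l by rewrite -(hk l) addrK.
have : \sum_l y l * WW xpredT l = 0.
  under eq_bigr do rewrite Wy.
  exact: antisym.
under eq_bigr do rewrite yl mulrBl.
rewrite sumrB -mulr_sumr.
have -> : \sum_l WW xpredT l = 0.
  under eq_bigr do rewrite Wy.
  exact: sum_bv.
rewrite mulr0 sub0r /z.
under eq_bigr do rewrite !mulrDl -!mulrA.
rewrite !big_split /= !sum_deltaL Wi Wj Wk.
move=> /eqP; rewrite oppr_eq0 => /eqP e0.
have S0 : S = 0 by rewrite Sz; move: e0; rewrite !mulrN1 -!opprD => /eqP; rewrite oppr_eq0 => /eqP.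
move=> l li lj lk.
have := yl l; rewrite S0 mul0r sub0r /z.
by rewrite (negbTE li) (negbTE lj) (negbTE lk) !mul0r !addr0 oppr0.
Qed.

Lemma twopt (Y : 'I_n -> C) p1 p2 : p1 != p2 ->
  (forall p, p != p1 -> p != p2 -> Y p = 0) -> \sum_p Y p = 0 ->
  bv Y p1 = bv Y p2.
Proof.
move=> d12 hY hs.
have e : forall (F : 'I_n -> C), (forall p, p != p1 -> p != p2 -> F p = 0) ->
    \sum_p F p = F p1 + F p2.
  move=> F hF.
  rewrite (bigD1 p1) //= (bigD1 p2) /=; last by rewrite eq_sym.
  rewrite big1 ?addr0 // => p /andP[h1 h2]; exact: hF.
have Y2 : Y p2 = - Y p1.
  by move: hs; rewrite e // => /eqP; rewrite addr_eq0 => /eqP ->; rewrite opprK.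
rewrite /bv !e; first last.
- by move=> p h1 h2; rewrite hY ?mulr0.
- by move=> p h1 h2; rewrite hY ?mulr0.
rewrite !bdiag Y2 (balt p1 p2); ring.
Qed.

Lemma WW_ge0 (P : pred 'I_n.-1) (l : 'I_n) :
  (forall m, m \in I -> P m -> l != ord_lo m /\ l != ord_hi m) -> 0 <= WW P l.
Proof.
move=> h; apply: sumr_ge0 => m mI.
case: ifP => Pm //.
apply: mulr_ge0; first exact: ler0n.
have [ne1 ne2] := h m mI Pm.
have [_ hk] := hsm mI.
have [k hk'] := hk l ne1 ne2.
by rewrite /theta /smoothable_weight (negbTE ne1) (negbTE ne2) /= hk' ler0n.
Qed.

Lemma core (a bm c : 'I_n) : (a < bm)%N -> (bm < c)%N ->
  (forall l, l != a -> l != bm -> l != c -> YY xpredT l = 0) ->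
  WW xpredT a = -1 -> WW xpredT bm = -1 -> WW xpredT c = -1 -> False.
Proof.
move=> abm bmc hy Wa Wb Wc.
pose P1 := fun m : 'I_n.-1 => (m < bm)%N.
pose P2 := fun m : 'I_n.-1 => ~~ (m < bm)%N.
have hsplit (F : 'I_n.-1 -> C) :
    \sum_(m in I) (if xpredT m then F m else 0) =
    \sum_(m in I) (if P1 m then F m else 0) + \sum_(m in I) (if P2 m then F m else 0).
  rewrite -big_split; apply: eq_bigr => m _ /=.
  by rewrite /P1 /P2; case: (m < bm)%N => /=; rewrite ?addr0 ?add0r.
have Ysp p : YY xpredT p = YY P1 p + YY P2 p by rewrite /YY hsplit.
have Wsp l : WW xpredT l = WW P1 l + WW P2 l by rewrite /WW hsplit.
have y2lo (p : 'I_n) : (p < bm)%N -> YY P2 p = 0.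
  move=> hp; rewrite /YY big1 // => m _; rewrite /P2; case: ifP => // hm.
  rewrite /dd.
  have -> : (p == ord_lo m) = false.
    by apply/negbTE/eqP => /(congr1 val) /=; lia.
  have -> : (p == ord_hi m) = false.
    by apply/negbTE/eqP => /(congr1 val) /=; lia.
  by rewrite subrr mulr0.
have y1hi (p : 'I_n) : (bm < p)%N -> YY P1 p = 0.
  move=> hp; rewrite /YY big1 // => m _; rewrite /P1; case: ifP => // hm.
  rewrite /dd.
  have -> : (p == ord_lo m) = false.
    by apply/negbTE/eqP => /(congr1 val) /=; lia.
  have -> : (p == ord_hi m) = false.
    by apply/negbTE/eqP => /(congr1 val) /=; lia.
  by rewrite subrr mulr0.
have neq (u v : 'I_n) : (u < v)%N -> u != v.
  by move=> h; apply/eqP => /(congr1 val) /=; lia.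
have sup1 (p : 'I_n) : p != a -> p != bm -> YY P1 p = 0.
  move=> pa pb.
  case: (ltnP p bm) => hp.
    have : YY xpredT p = 0.
      apply: hy => //; apply/eqP => /(congr1 val) /=; lia.
    by rewrite Ysp y2lo // addr0.
  apply: y1hi; move/eqP: pb => pb.
  have : (p : nat) <> bm by move=> e; apply: pb; apply: val_inj.
  lia.
have sup2 (p : 'I_n) : p != bm -> p != c -> YY P2 p = 0.
  move=> pb pc.
  case: (ltnP p bm) => hp; first by rewrite y2lo.
  have : YY xpredT p = 0.
    apply: hy => //; apply/eqP => /(congr1 val) /=; move/eqP: pb => pb.
    lia.
  rewrite Ysp y1hi ?add0r //.
  have : (p : nat) <> bm by move=> e; move/eqP: pb; apply; apply: val_inj.
  lia.
have E1 : WW P1 a = WW P1 bm.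
  rewrite -!bvYY; apply: twopt => //; [exact: neq | exact: sumYY].
have E2 : WW P2 bm = WW P2 c.
  rewrite -!bvYY; apply: twopt => //; [exact: neq | exact: sumYY].
have hA : 0 <= WW P2 a.
  apply: WW_ge0 => m _ hm; rewrite /P2 in hm.
  by split; apply/eqP => /(congr1 val) /=; lia.
have hC : 0 <= WW P1 c.
  apply: WW_ge0 => m _ hm; rewrite /P1 in hm.
  by split; apply/eqP => /(congr1 val) /=; lia.
have := addr_ge0 hA hC.
have -> : WW P2 a + WW P1 c =
   (WW P1 a + WW P2 a) + (WW P1 c + WW P2 c) - (WW P1 bm + WW P2 bm).
  rewrite E1 -E2; ring.
rewrite -!Wsp Wa Wb Wc.
have -> : (-1 + -1 - -1 : C) = -1 by ring.
by rewrite ler0N1.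
Qed.

Lemma final i j k (c1 c2 c3 : C) : i != j -> j != k -> i != k ->
  (forall l, WW xpredT l = c1 * b i l + c2 * b j l + c3 * b k l) ->
  WW xpredT i = -1 -> WW xpredT j = -1 -> WW xpredT k = -1 -> False.
Proof.
move=> dij djk dik hc Wi Wj Wk.
have hy := F0 hc Wi Wj Wk.
have lt (u v : 'I_n) : u != v -> (u < v)%N \/ (v < u)%N.
  by rewrite -(inj_eq val_inj) /= neq_ltn => /orP[]; tauto.
case: (lt _ _ dij) => hij; case: (lt _ _ djk) => hjk; case: (lt _ _ dik) => hik.
all: try lia.
all: first [ apply: (core (a:=i) (bm:=j) (c:=k)) => //; move=> l ? ? ?; by apply: hy
           | apply: (core (a:=i) (bm:=k) (c:=j)) => //; move=> l ? ? ?; by apply: hy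
           | apply: (core (a:=j) (bm:=i) (c:=k)) => //; move=> l ? ? ?; by apply: hy
           | apply: (core (a:=j) (bm:=k) (c:=i)) => //; move=> l ? ? ?; by apply: hy
           | apply: (core (a:=k) (bm:=i) (c:=j)) => //; move=> l ? ? ?; by apply: hy
           | apply: (core (a:=k) (bm:=j) (c:=i)) => //; move=> l ? ? ?; by apply: hy ].
Qed.

End Pf.

Theorem lemma5p3 (R : realType) (n : nat) (lam b : 'M[R[i]]_n)
    (I : {set 'I_n.-1}) :
  add_alternating lam -> normalized lam -> generic lam ->
  biresidue_of lam b ->
  (forall i, i \in I -> smoothable b (ord_lo i) (ord_hi i)) ->
  forall (nu : 'I_n.-1 -> nat) (w : 'I_n -> int),
    (forall k, (w k)%:~R = \sum_(i in I) (nu i)%:R * theta b i k) ->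
    ~ obstructed b w.
Proof.
move=> _ _ _ [bnorm [balt bres']] hsm nu w hw.
have bres : forall z : 'cV[R[i]]_n, in_Delta z -> lam *m (b *m z) = z.
  by move=> z hz; case: (bres' z hz).
move=> [i [j [k [[dij djk dik] [[wi wj wk] [_ [c1 [c2 [c3 hc]]]]]]]]].
have hW l : WW b I nu xpredT l = (w l)%:~R.
  by rewrite hw /WW; apply: eq_bigr.
apply: (final balt bnorm bres hsm dij djk dik (c1:=c1) (c2:=c2) (c3:=c3) (nu:=nu)).
- by move=> l; rewrite hW hc.
- by rewrite hW wi.
- by rewrite hW wj.
- by rewrite hW wk.
Qed.
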